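(* Let $n\ge 2$, $p=n-1$, and let $m_0,\dots,m_p,m_n$ and the integers $q,r,q_z,r_z,\varepsilon,\upsilon,w$ be as in the context. Let $I\subseteq K[x_0,\dots,x_n]$ ($K$ a field) be the monomial ideal generated by $x_ix_p^{q}$ for $r\le i\le p$; $x_jx_p^{\,q-q_z-\varepsilon}x_n^{\upsilon-w}$ for $\varepsilon p+r-r_z\le j\le p$; $x_n^{\upsilon}$; $x_ix_j$ for $1\le i\le j\le p-1$. (This ideal $I$ is the initial ideal $\mathrm{in}(P)$ of the defining ideal $P$ of the monomial curve $x_i=t^{m_i}$, i.e. $P=\ker(K[x_0,\dots,x_n]\to K[t],\ x_i\mapsto t^{m_i})$, with respect to the grevlex order with $x_0<x_1<\dots<x_n$ refined by the grading $\mathrm{wt}(x_i)=m_i$.) Then $I$ is Ratliff-Rush closed, i.e. $\widetilde{I}=I$.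
   Context: Ratliff-Rush closure: for an ideal $I$ of a commutative Noetherian ring $R$ containing a nonzerodivisor, $\widetilde I=\bigcup_{k\ge1}(I^{k+1}:I^k)$, where $I^{k+1}:I^k=\{x\in R: xI^k\subseteq I^{k+1}\}$; $I$ is Ratliff-Rush closed if $\widetilde I=I$. Setup: $n\ge2$, $p=n-1$; $m_0<m_1<\dots<m_p$ are positive integers forming an arithmetic sequence, $m_n$ is an arbitrary positive integer, $\gcd(m_0,\dots,m_n)=1$, and $m_0,\dots,m_p,m_n$ minimally generate the numerical semigroup $\Gamma=\sum_{i=0}^n\mathbb N_0m_i$. Put $\Gamma'=\sum_{i=0}^p\mathbb N_0 m_i$. For an integer $t\ge0$ define $q_t\in\mathbb Z$, $r_t\in[1,p]$ by $t=q_tp+r_t$, and $g_t=q_tm_p+m_{r_t}\in\Gamma'$. Let $S=\{\gamma\in\Gamma:\gamma-m_0\notin\Gamma\}$, $u=\min\{t\ge0: g_t\notin S\}$, $\upsilon=\min\{b\ge1: bm_n\in\Gamma'\}$. There are unique integers $w\in[0,\upsilon-1]$, $z\in[0,u-1]$, $\lambda\ge1$, $\mu\ge0$ with $g_u=\lambda m_0+wm_n$ and $\upsilon m_n=\mu m_0+g_z$. Set $q=q_u$, $r=r_u$, and $\varepsilon=0$ if $r>r_z$, $\varepsilon=1$ if $r\le r_z$. *)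

(* Defs.v *)
From mathcomp Require Import all_boot all_algebra.
From mathcomp Require Export mpoly.
Set Implicit Arguments. Unset Strict Implicit. Unset Printing Implicit Defensive.
Import GRing.Theory Num.Theory.

Local Open Scope ring_scope.

Definition ideal_span {R : comRingType} (A : R -> Prop) (f : R) : Prop :=
  exists (k : nat) (c a : 'I_k -> R),
    (forall i, A (a i)) /\ f = \sum_(i < k) c i * a i.

Definition ideal_mul {R : comRingType} (A B : R -> Prop) : R -> Prop :=
  ideal_span (fun x => exists a b, A a /\ B b /\ x = a * b).

Fixpoint ideal_pow {R : comRingType} (I : R -> Prop) (k : nat) : R -> Prop :=
  match k with
  | 0 => ideal_span (fun x => x = 1)
  | k'.+1 => ideal_mul I (ideal_pow I k')
  end.

Definition ideal_colon {R : comRingType} (J L : R -> Prop) (x : R) : Prop :=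
  forall y, L y -> J (x * y).

Definition ratliff_rush {R : comRingType} (I : R -> Prop) (x : R) : Prop :=
  exists k, (1 <= k)%N /\ ideal_colon (ideal_pow I k.+1) (ideal_pow I k) x.

Definition rr_closed {R : comRingType} (I : R -> Prop) : Prop :=
  forall x, ratliff_rush I x <-> I x.

Local Close Scope ring_scope.

Definition in_sg (k : nat) (m : nat -> nat) (g : nat) : Prop :=
  exists c : nat -> nat, g = \sum_(i < k) c i * m i.

Definition apery (n : nat) (m : nat -> nat) (g : nat) : Prop :=
  in_sg n.+1 m g /\ ~ (m 0 <= g /\ in_sg n.+1 m (g - m 0)).

(* t = q_t p + r_t with r_t in [1,p] *)
Definition qt (p t : nat) : int :=
  if t is t'.+1 then (t' %/ p)%:Z else (-1)%R.
Definition rt (p t : nat) : nat :=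
  if t is t'.+1 then (t' %% p).+1 else p.
(* g_t = q_t m_p + m_{r_t} (= 0 for t = 0) *)
Definition gt (p : nat) (m : nat -> nat) (t : nat) : nat :=
  if t is t'.+1 then t' %/ p * m p + m (t' %% p).+1 else 0.

Definition Xv (K : fieldType) (n i : nat) : {mpoly K[n.+1]} := 'X_(inord i).

(* Main.v *)
Require Import Defs.
From mathcomp Require Import all_boot all_algebra.
From mathcomp Require Import mpoly.
From mathcomp Require Import zify.
From Stdlib Require Import Classical.
Import GRing.Theory Num.Theory.

Inductive kind := KA of nat | KB of nat | KC | KD of nat & nat.

Definition degv (n p q e v w : nat) (k : kind) (j : nat) : nat :=
  match k with
  | KA i => (i == j) + (p == j) * q
  | KB i => (i == j) + (p == j) * e + (n == j) * (v - w)
  | KC => (n == j) * v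
  | KD i i' => (i == j) + (i' == j)
  end.

Definition valid (p r eps rz : nat) (k : kind) : bool :=
  match k with
  | KA i => (r <= i) && (i <= p)
  | KB j => (eps * p + r <= j + rz) && (j <= p)
  | KC => true
  | KD i j => (1 <= i) && (i <= j) && (j <= p.-1)
  end.

Definition isAp p k := if k is KA i then i == p else false.
Definition isAm p k := if k is KA i then i != p else false.
Definition isBp p k := if k is KB i then i == p else false.
Definition isB0 k := if k is KB i then i == 0 else false.
Definition isBm p k := if k is KB i then (i != 0) && (i != p) else false.
Definition isC k := if k is KC then true else false.
Definition isD k := if k is KD _ _ then true else false.

Definition sumv n p q e v w (s : seq kind) j := \sum_(k <- s) degv n p q e v w k j.

Lemma cnt_size p (s : seq kind) : (0 < p) ->
  count (isAp p) s + count (isAm p) s + count (isBp p) s + count isB0 s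
  + count (isBm p) s + count isC s + count isD s = size s.
Proof.
move=> p0; elim: s => [|k s IH] //=; case: k => [i|i||i i'] /=.
- by case: eqP => /= _; lia.
- case: (i =P p) => [->|ip] /=; first by rewrite (gtn_eqF p0) /=; lia.
  by case: (i =P 0) => /= _; lia.
- lia.
- lia.
Qed.


Lemma sum_y n p q e v w r eps rz (s : seq kind) : (0 < p) -> p < n -> (1 <= r) ->
  all (valid p r eps rz) s ->
  sumv n p q e v w s p = (q+1) * count (isAp p) s + q * count (isAm p) s
     + (e+1) * count (isBp p) s + e * (count isB0 s + count (isBm p) s).
Proof.
move=> p0 pn r1; rewrite /sumv; elim: s => [|k s IH] /=; first by rewrite big_nil; lia.
case/andP => vk /IH {}IH; rewrite big_cons IH; case: k vk => [i|i||i i'] /= vk; rewrite ?eqxx.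
- by case: eqP => _ /=; lia.
- rewrite (gtn_eqF pn); case: (i =P p) => [ip|ip] /=.
  + by subst i; rewrite (gtn_eqF p0) /=; lia.
  + by case: (i =P 0) => /= _; lia.
- rewrite (gtn_eqF pn); lia.
- have -> : (i == p) = false by apply/negbTE; lia.
  have -> : (i' == p) = false by apply/negbTE; lia.
  lia.
Qed.

Lemma sum_t n p q e v w r eps rz (s : seq kind) : (0 < p) -> p < n -> (1 <= r) ->
  all (valid p r eps rz) s ->
  sumv n p q e v w s n = (v - w) * (count (isBp p) s + count isB0 s + count (isBm p) s)
     + v * count isC s.
Proof.
move=> p0 pn r1; rewrite /sumv; elim: s => [|k s IH] /=; first by rewrite big_nil; lia.
case/andP => vk /IH {}IH; rewrite big_cons IH; case: k vk => [i|i||i i'] /= vk; rewrite ?eqxx.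
- have -> : (i == n) = false by apply/negbTE; lia.
  rewrite (ltn_eqF pn); lia.
- have -> : (i == n) = false by apply/negbTE; lia.
  rewrite (ltn_eqF pn) /=.
  case: (i =P p) => [ip|ip] /=.
  + by subst i; rewrite (gtn_eqF p0) /=; lia.
  + by case: (i =P 0) => /= _; lia.
- lia.
- have -> : (i == n) = false by apply/negbTE; lia.
  have -> : (i' == n) = false by apply/negbTE; lia.
  lia.
Qed.

Lemma sum_x0 n p q e v w r eps rz (s : seq kind) : (0 < p) -> p < n -> (1 <= r) ->
  all (valid p r eps rz) s ->
  sumv n p q e v w s 0 = count isB0 s.
Proof.
move=> p0 pn r1; rewrite /sumv; elim: s => [|k s IH] /=; first by rewrite big_nil.
case/andP => vk /IH {}IH; rewrite big_cons IH; case: k vk => [i|i||i i'] /= vk.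
- have -> : (i == 0) = false by apply/negbTE; lia.
  rewrite (gtn_eqF p0); lia.
- rewrite (gtn_eqF p0) (gtn_eqF (leq_ltn_trans (leq0n p) pn)); lia.
- rewrite (gtn_eqF (leq_ltn_trans (leq0n p) pn)); lia.
- have -> : (i == 0) = false by apply/negbTE; lia.
  have -> : (i' == 0) = false by apply/negbTE; lia.
  lia.
Qed.

Lemma sum_ind a b i x : \sum_(a <= j < b) (i == j) * x = (a <= i < b) * x.
Proof.
elim: b => [|b IH]; first by rewrite big_geq //; lia.
case: (leqP a b) => ab.
- rewrite big_nat_recr //= IH; case: (i =P b) => [->|ib] /=; lia.
- by rewrite big_geq //; lia.
Qed.

Lemma sum_ind1 a b i : \sum_(a <= j < b) (i == j) = (a <= i < b).
Proof.
have := sum_ind a b i 1; rewrite muln1 => <-.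
by apply: eq_bigr => j _; rewrite muln1.
Qed.

Lemma elem_le n p q e v w (s : seq kind) k j : List.In k s -> degv n p q e v w k j <= sumv n p q e v w s j.
Proof.
rewrite /sumv; elim: s => [|k' s IH] //=; rewrite big_cons.
case => [->|/IH h]; lia.
Qed.

Lemma count_ex (P : pred kind) (s : seq kind) : 0 < count P s -> exists k, List.In k s /\ P k.
Proof.
elim: s => [|k s IH] //=; case: (boolP (P k)) => Pk /=.
- by move=> _; exists k; split => //; left.
- by move/IH => [k' [h1 h2]]; exists k'; split => //; right.
Qed.

Lemma all_In (P : pred kind) (s : seq kind) k : all P s -> List.In k s -> P k.
Proof. by elim: s => [|k' s IH] //= /andP [h1 h2] [<-|/IH]; auto. Qed.

Lemma sum_mid n p q e v w r eps rz (s : seq kind) : (0 < p) -> p < n -> (1 <= r) ->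
  all (valid p r eps rz) s ->
  \sum_(1 <= j < p) sumv n p q e v w s j = count (isAm p) s + count (isBm p) s + 2 * count isD s.
Proof.
move=> p0 pn r1; rewrite /sumv.
rewrite (exchange_big_dep xpredT) //=.
elim: s => [|k s IH] /=; first by rewrite big_nil.
case/andP => vk /IH {}IH; rewrite big_cons IH; case: k vk => [i|i||i i'] /= vk.
- rewrite big_split /= sum_ind1 sum_ind /=.
  case: (i =P p) => [ip|ip] /=; lia.
- rewrite !big_split /= sum_ind1 !sum_ind /=.
  case: (i =P p) => [ip|ip] /=; case: (i =P 0) => [i0|i0] /=; lia.
- rewrite sum_ind /=; lia.
- rewrite big_split /= !sum_ind1; lia.
Qed.

Lemma one_le (f : nat -> nat) a b : 1 <= \sum_(a <= t < b) f t -> exists i, a <= i < b /\ 1 <= f i.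
Proof.
elim: b => [|b IH]; first by rewrite big_geq.
case: (leqP a b) => ab; last by rewrite big_geq.
rewrite big_nat_recr //=; case: (posnP (f b)) => fb h.
- have [i [h1 h2]] := IH (ltac:(lia)); exists i; split => //; lia.
- by exists b; split => //; lia.
Qed.

Lemma two_le (f : nat -> nat) a b : 2 <= \sum_(a <= t < b) f t ->
  exists i j, a <= i <= j /\ j < b /\ forall t, (i == t) + (j == t) <= f t.
Proof.
elim: b => [|b IH]; first by rewrite big_geq.
case: (leqP a b) => ab; last by rewrite big_geq.
rewrite big_nat_recr //= => h.
case: (leqP 2 (\sum_(a <= t < b) f t)) => h2.
- have [i [j [h3 [h4 h5]]]] := IH h2; exists i, j; split => //; split => //; lia.
case: (leqP 2 (f b)) => fb.
- exists b, b; split; first lia; split; first lia.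
  by move=> t; case: (b =P t) => bt /=; subst; lia.
- have h1 : 1 <= \sum_(a <= t < b) f t by lia.
  have [i [h3 h4]] := one_le f a b h1.
  exists i, b; split; first lia; split; first lia.
  move=> t; case: (i =P t) => it; case: (b =P t) => bt /=; subst; lia.
Qed.

Lemma arithAF (q e v w b c k nAp nAm nBp nB0 nBm nC nD : nat) :
 e <= q -> w < v -> c < v -> b <= q ->
 nAp+nAm+nBp+nB0+nBm+nC+nD = k+1 ->
 (q+1)*nAp + q*nAm + (e+1)*nBp + e*(nB0+nBm) <= b + k*(q+1) ->
 (v-w)*(nBp+nB0+nBm) + v*nC <= c ->
 nAm + nBm + 2*nD <= 1 ->
 (0 < nAm -> b < q) -> v - w <= c.
Proof.
move=> eq wv cv bq sz hy ht hm hA.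
have nC0 : nC = 0 by nia.
have nD0 : nD = 0 by lia.
case: (posnP (nBp+nB0+nBm)) => hB; last by nia.
have [nAm0|nAm1] : nAm = 0 \/ nAm = 1 by lia.
- have : nAp = k+1 by lia.
  move=> h; rewrite h nAm0 in hy; nia.
- have : nAp = k by lia.
  move=> h; rewrite h nAm1 in hy; have := hA (ltac:(lia)); nia.
Qed.

Lemma arithCF (q e v w b c k nAp nAm nBp nB0 nBm nC nD : nat) :
 e <= q -> w < v -> c < v -> b <= e -> v - w <= c ->
 nAp+nAm+nBp+nB0+nBm+nC+nD = k+1 ->
 (q+1)*nAp + q*nAm + (e+1)*nBp + e*(nB0+nBm) <= b ->
 (v-w)*(nBp+nB0+nBm) + v*nC <= c + k*v ->
 nAm + nBm + 2*nD <= 1 ->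
 (0 < nAm -> b < q) ->
 (0 < nB0 -> ~ (e <= b /\ v-w <= c)) ->
 (0 < nBm -> ~ (e <= b /\ v-w <= c)) -> False.
Proof.
move=> eq wv cv be cw sz hy ht hm hA hB0 hBm.
have nD0 : nD = 0 by lia.
set rest := nAp+nAm+nBp+nB0+nBm.
have hr1 : 1 <= rest.
  case: (posnP rest) => // h0.
  have : nC = k+1 by rewrite /rest in h0; lia.
  move=> h; rewrite h in ht; nia.
have hy2 : e * rest + nAp + nBp <= b.
  rewrite /rest; nia.
case: (ltnP 1 rest) => hr.
- have e0 : e = 0 by nia.
  rewrite e0 in hy hB0 hBm.
  have nAp0 : nAp = 0 by nia.
  have nBp0 : nBp = 0 by nia.
  have nAm0 : nAm = 0.
    case: (posnP nAm) => // h; have := hA h; nia.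
  have : 0 < nB0 by rewrite /rest in hr; lia.
  move/hB0; apply; lia.
- have hr' : rest = 1 by lia.
  rewrite /rest in hr'.
  have [h|[h|[h|[h|h]]]] : (nAp = 1 \/ nAm = 1 \/ nBp = 1 \/ nB0 = 1 \/ nBm = 1) by lia.
  + nia.
  + have := hA (ltac:(lia)); nia.
  + nia.
  + apply: (hB0 (ltac:(lia))); split => //; nia.
  + apply: (hBm (ltac:(lia))); split => //; nia.
Qed.

Lemma list_facts n p q e v w r eps rz (mv sh : nat -> nat) (s : seq kind) :
  2 <= n -> p = n.-1 -> 1 <= r <= p ->
  (forall kd, valid p r eps rz kd -> ~ (forall j, j <= n -> degv n p q e v w kd j <= mv j)) ->
  all (valid p r eps rz) s ->
  (forall j, j <= n -> sumv n p q e v w s j <= mv j + sh j) ->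
  (forall j, j < p -> sh j = 0) ->
  [/\ 0 < count (isAm p) s -> mv p < q,
      0 < count isB0 s -> ~ (e <= mv p /\ v - w <= mv n),
      0 < count (isBm p) s -> ~ (e <= mv p /\ v - w <= mv n) &
      count (isAm p) s + count (isBm p) s + 2 * count isD s <= \sum_(1 <= j < p) mv j].
Proof.
move=> n2 pE /andP [r1 rp] H als hs hsh.
have p0 : 0 < p by lia.
have pn : p < n by lia.
split.
- move/count_ex => [kd [ins isk]].
  case: kd ins isk => [i| | |] //= ins ip.
  have vi := all_In _ _ _ als ins; rewrite /= in vi.
  have := @elem_le n p q e v w s _ i ins; rewrite /= ?eqxx /=.
  have := hs i (ltac:(lia)); rewrite hsh; last by lia.
  move=> h1 h2; case: (ltnP (mv p) q) => // hq; exfalso.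
  apply: (H (KA i) vi) => j jn /=.
  case: (i =P j) => ij; case: (p =P j) => pj /=; subst; lia.
- move/count_ex => [kd [ins isk]].
  case: kd ins isk => [|i| |] //= ins /eqP i0; subst i.
  have vi := all_In _ _ _ als ins.
  have := @elem_le n p q e v w s _ 0 ins; rewrite /= ?eqxx /=.
  have := hs 0 (ltac:(lia)); rewrite hsh; last by lia.
  move=> h1 h2 [h3 h4]; apply: (H (KB 0) vi) => j jn /=.
  case: (0 =P j) => ij; case: (p =P j) => pj; case: (n =P j) => nj /=; subst; lia.
- move/count_ex => [kd [ins isk]].
  case: kd ins isk => [|i| |] //= ins /andP [i0 ip].
  have vi := all_In _ _ _ als ins; rewrite /= in vi.
  have := @elem_le n p q e v w s _ i ins; rewrite /= ?eqxx /=.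
  have := hs i (ltac:(lia)); rewrite hsh; last by lia.
  move=> h1 h2 [h3 h4]; apply: (H (KB i) vi) => j jn /=.
  case: (i =P j) => ij; case: (p =P j) => pj; case: (n =P j) => nj /=; subst; lia.
- rewrite -(sum_mid n p q e v w r eps rz) //.
  rewrite big_nat_cond [X in _ <= X]big_nat_cond.
  apply: leq_sum => j /andP [/andP [j1 jp] _].
  by have := hs j (ltac:(lia)); rewrite hsh //; lia.
Qed.

Lemma core n p q e v w r eps rz k (mv : nat -> nat) :
  2 <= n -> p = n.-1 -> 1 <= r <= p -> e <= q -> w < v -> eps * p + r <= p + rz ->
  (forall kd, valid p r eps rz kd -> ~ (forall j, j <= n -> degv n p q e v w kd j <= mv j)) ->
  (exists s, [/\ all (valid p r eps rz) s, size s = k.+1 &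
     forall j, j <= n -> sumv n p q e v w s j <= mv j + (j == p) * (k * (q + 1))]) ->
  (exists s, [/\ all (valid p r eps rz) s, size s = k.+1 &
     forall j, j <= n -> sumv n p q e v w s j <= mv j + (j == n) * (k * v)]) ->
  False.
Proof.
move=> n2 pE /andP [r1 rp] eq wv Bp H [s1 [al1 sz1 hs1]] [s2 [al2 sz2 hs2]].
have p0 : 0 < p by lia.
have pn : p < n by lia.
have rr : 1 <= r <= p by lia.
have hC : mv n < v.
  case: (ltnP (mv n) v) => // h; exfalso; apply: (H KC) => // j jn /=.
  by case: (n =P j) => nj /=; subst; lia.
have hAp : mv p <= q.
  case: (leqP (mv p) q) => // h; exfalso; apply: (H (KA p)); first by rewrite /=; lia.
  by move=> j jn /=; case: (p =P j) => nj /=; subst; lia.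
have hBp : ~ (e + 1 <= mv p /\ v - w <= mv n).
  move=> [h1 h2]; apply: (H (KB p)); first by rewrite /=; lia.
  move=> j jn /=; case: (p =P j) => pj; case: (n =P j) => nj /=; subst; lia.
have hmid : \sum_(1 <= j < p) mv j <= 1.
  case: (leqP (\sum_(1 <= j < p) mv j) 1) => // /two_le [i [j [h1 [h2 h3]]]]; exfalso.
  apply: (H (KD i j)); first by rewrite /=; lia.
  by move=> t tn /=; apply: h3.
have [a1 b1 c1 d1] := list_facts n p q e v w r eps rz mv (fun j => (j == p) * (k * (q + 1))) s1
  n2 pE rr H al1 hs1 (fun j jp => ltac:(rewrite /= (ltn_eqF jp); lia)).
have y1 := hs1 p (ltac:(lia)); rewrite (sum_y n p q e v w r eps rz) // eqxx in y1.
have t1 := hs1 n (leqnn n); rewrite (sum_t n p q e v w r eps rz) // (gtn_eqF pn) in t1.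
have sz1' := cnt_size p s1 p0; rewrite sz1 in sz1'.
have cw : v - w <= mv n.
  apply: (arithAF q e v w (mv p) (mv n) k (count (isAp p) s1) (count (isAm p) s1)
    (count (isBp p) s1) (count isB0 s1) (count (isBm p) s1) (count isC s1) (count isD s1)) => //;
  lia.
have be : mv p <= e by case: (leqP (mv p) e) => // h; case: hBp; split; lia.
have [a2 b2 c2 d2] := list_facts n p q e v w r eps rz mv (fun j => (j == n) * (k * v)) s2
  n2 pE rr H al2 hs2 (fun j jp => ltac:(rewrite /= (ltn_eqF (ltn_trans jp pn)); lia)).
have y2 := hs2 p (ltac:(lia)); rewrite (sum_y n p q e v w r eps rz) // (ltn_eqF pn) in y2.
have t2 := hs2 n (leqnn n); rewrite (sum_t n p q e v w r eps rz) // eqxx in t2.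
have sz2' := cnt_size p s2 p0; rewrite sz2 in sz2'.
apply: (arithCF q e v w (mv p) (mv n) k (count (isAp p) s2) (count (isAm p) s2)
    (count (isBp p) s2) (count isB0 s2) (count (isBm p) s2) (count isC s2) (count isD s2)) => //;
  lia.
Qed.


Set Implicit Arguments. Unset Strict Implicit.
Local Open Scope ring_scope.



Definition good {K : fieldType} {N : nat} (Q : 'X_{1..N} -> Prop) (f : {mpoly K[N]}) :=
  forall m, m \in msupp f -> Q m.
Definition upc {N : nat} (Q : 'X_{1..N} -> Prop) :=
  forall m m', (m <= m')%MM -> Q m -> Q m'.

Lemma good0 (K : fieldType) N (Q : 'X_{1..N} -> Prop) : good Q (0 : {mpoly K[N]}).
Proof. by move=> m; rewrite msupp0. Qed.

Lemma goodD (K : fieldType) N (Q : 'X_{1..N} -> Prop) (f g : {mpoly K[N]}) :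
  good Q f -> good Q g -> good Q (f + g).
Proof. by move=> hf hg m /msuppD_le; rewrite mem_cat => /orP[/hf|/hg]. Qed.

Lemma goodMl (K : fieldType) N (Q : 'X_{1..N} -> Prop) (c f : {mpoly K[N]}) :
  upc Q -> good Q f -> good Q (c * f).
Proof.
move=> uQ hf m /msuppM_le /allpairsP [[m1 m2] /= [_ h2 ->]].
by apply: (uQ m2); [exact: lem_addl | exact: hf].
Qed.

Lemma span_good (K : fieldType) N (Q : 'X_{1..N} -> Prop) (A : {mpoly K[N]} -> Prop) f :
  upc Q -> (forall a, A a -> good Q a) -> ideal_span A f -> good Q f.
Proof.
move=> uQ hA [k [c [a [Ha ->]]]].
apply: (big_ind (good Q)); [exact: good0 | exact: goodD |].
by move=> i _; apply: goodMl => //; apply: hA.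
Qed.

Lemma span_single (R : comRingType) (A : R -> Prop) a : A a -> ideal_span A a.
Proof.
move=> Ha; exists 1%N, (fun _ => 1), (fun _ => a); split => //.
by rewrite big_ord1 mul1r.
Qed.

Definition mulQ {N : nat} (Q1 Q2 : 'X_{1..N} -> Prop) (m : 'X_{1..N}) :=
  exists m1 m2, Q1 m1 /\ Q2 m2 /\ (m1 + m2 <= m)%MM.

Lemma upc_mulQ N (Q1 Q2 : 'X_{1..N} -> Prop) : upc (mulQ Q1 Q2).
Proof.
move=> m m' le [m1 [m2 [h1 [h2 h3]]]]; exists m1, m2; split => //; split => //.
exact: lepm_trans h3 le.
Qed.

Lemma mul_good (K : fieldType) N (Q1 Q2 : 'X_{1..N} -> Prop) (A B : {mpoly K[N]} -> Prop) f :
  (forall a, A a -> good Q1 a) -> (forall b, B b -> good Q2 b) ->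
  ideal_mul A B f -> good (mulQ Q1 Q2) f.
Proof.
move=> hA hB; apply: span_good; first exact: upc_mulQ.
move=> x [a [b [Ha [Hb ->]]]]; rewrite /good => m /msuppM_le /allpairsP [[m1 m2] /= [h1 h2 ->]].
by exists m1, m2; split; [exact: (hA a Ha m1 h1) | split; [exact: (hB b Hb m2 h2) | exact: lepm_refl]].
Qed.

Lemma span_add (R : comRingType) (A : R -> Prop) f g :
  ideal_span A f -> ideal_span A g -> ideal_span A (f + g).
Proof.
move=> [k1 [c1 [a1 [H1 ->]]]] [k2 [c2 [a2 [H2 ->]]]].
exists (k1 + k2)%N, (fun i => match split i with inl j => c1 j | inr j => c2 j end),
  (fun i => match split i with inl j => a1 j | inr j => a2 j end); split.
  by move=> i; case: (split i).
rewrite big_split_ord /=; congr (_ + _); apply: eq_bigr => i _.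
  by have := @unsplitK k1 k2 (inl i) => /= ->.
by have := @unsplitK k1 k2 (inr i) => /= ->.
Qed.

Lemma span_mull (R : comRingType) (A : R -> Prop) c f :
  ideal_span A f -> ideal_span A (c * f).
Proof.
move=> [k [c1 [a1 [H1 ->]]]]; exists k, (fun i => c * c1 i), a1; split => //.
by rewrite mulr_sumr; apply: eq_bigr => i _; rewrite mulrA.
Qed.

Lemma span0 (R : comRingType) (A : R -> Prop) : ideal_span A 0.
Proof. by exists 0%N, (fun _ => 0), (fun _ => 0); split; [by case | by rewrite big_ord0]. Qed.

Lemma pow_in (R : comRingType) (I : R -> Prop) a k : I a -> ideal_pow I k (a ^+ k).
Proof.
move=> Ha; elim: k => [|k IH] /=; first by apply: span_single; rewrite expr0.
by apply: span_single; exists a, (a ^+ k); rewrite exprS.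
Qed.

Local Close Scope ring_scope.

Definition dmn n p q e v w (kd : kind) : 'X_{1..n.+1} :=
  [multinom degv n p q e v w kd j | j < n.+1].

Lemma inord_eqE n i (j : 'I_n.+1) : i <= n -> (inord i == j) = (i == j).
Proof. by move=> h; rewrite -val_eqE /= inordK. Qed.

Lemma XvE (K : fieldType) n i : Xv K n i = 'X_[U_(inord i)].
Proof. by []. Qed.

Lemma dmnA (K : fieldType) n p q e v w i : p <= n -> i <= n ->
  'X_[dmn n p q e v w (KA i)] = (Xv K n i * Xv K n p ^+ q)%R.
Proof.
move=> pn iN; rewrite !XvE mpolyXn -mpolyXD; congr mpolyX.
apply/mnmP => j; rewrite mnmE mnmDE mulmnE !mnm1E !inord_eqE //.
Qed.

Lemma dmnB (K : fieldType) n p q e v w i : p <= n -> i <= n ->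
  'X_[dmn n p q e v w (KB i)] = (Xv K n i * Xv K n p ^+ e * Xv K n n ^+ (v - w))%R.
Proof.
move=> pn iN; rewrite !XvE !mpolyXn -!mpolyXD; congr mpolyX.
apply/mnmP => j; rewrite mnmE !mnmDE !mulmnE !mnm1E !inord_eqE //.
Qed.

Lemma dmnC (K : fieldType) n p q e v w :
  'X_[dmn n p q e v w KC] = (Xv K n n ^+ v)%R.
Proof.
rewrite !XvE !mpolyXn; congr mpolyX.
apply/mnmP => j; rewrite mnmE !mulmnE !mnm1E !inord_eqE //.
Qed.

Lemma dmnD (K : fieldType) n p q e v w i i' : i <= n -> i' <= n ->
  'X_[dmn n p q e v w (KD i i')] = (Xv K n i * Xv K n i')%R.
Proof.
move=> iN iN'; rewrite !XvE -!mpolyXD; congr mpolyX.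
apply/mnmP => j; rewrite mnmE !mnmDE !mnm1E !inord_eqE //.
Qed.

Definition Q1 {N} (gen : 'X_{1..N} -> Prop) (m : 'X_{1..N}) := exists g, gen g /\ (g <= m)%MM.
Fixpoint Pk {N} (gen : 'X_{1..N} -> Prop) (k : nat) (m : 'X_{1..N}) : Prop :=
  match k with 0 => True | k'.+1 => mulQ (Q1 gen) (Pk gen k') m end.

Lemma pow_good (K : fieldType) N (gen : 'X_{1..N} -> Prop) (G : {mpoly K[N]} -> Prop) :
  (forall f, G f -> exists g, gen g /\ f = 'X_[g]) ->
  forall k f, ideal_pow (ideal_span G) k f -> good (Pk gen k) f.
Proof.
move=> hG; elim=> [|k IH] f /=; first by move=> _ m.
move=> hf; apply: (@mul_good K N (Q1 gen) (Pk gen k) (ideal_span G) (ideal_pow (ideal_span G) k) f) => //.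
move=> a0; apply: span_good.
  by move=> m m' le [g [h1 h2]]; exists g; split => //; apply: lepm_trans h2 le.
move=> a /hG [g [hg ->]] m; rewrite msuppX mem_seq1 => /eqP ->.
by exists g; split => //; apply: lepm_refl.
Qed.

Lemma Pk_list n p q e v w r eps rz k (m : 'X_{1..n.+1}) :
  Pk (fun g => exists kd, valid p r eps rz kd /\ g = dmn n p q e v w kd) k m ->
  exists s, [/\ all (valid p r eps rz) s, size s = k &
     forall j, j <= n -> sumv n p q e v w s j <= m (inord j)].
Proof.
elim: k m => [|k IH] m /=.
  by move=> _; exists [::]; split => // j _; rewrite /sumv big_nil.
move=> [m1 [m2 [[g [[kd [vk ->]] le1]] [/IH [s [h1 h2 h3]] le2]]]].
exists (kd :: s); split; [by rewrite /= vk h1 | by rewrite /= h2 |].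
move=> j jn; rewrite /sumv big_cons -/(sumv _ _ _ _ _ _ s j).
move/mnm_lepP: le1 => /(_ (inord j)); rewrite mnmE inordK //.
move/mnm_lepP: le2 => /(_ (inord j)); rewrite mnmDE.
have := h3 j jn; lia.
Qed.

Unset Implicit Arguments.

Lemma params_ok (p u z : nat) : 0 < p -> z < u ->
  let q := (u.-1 %/ p)%N in
  let r := rt p u in
  let eps := if (rt p z < r)%N then 0%N else 1%N in
  let e := absz (qt p u - qt p z - eps%:Z)%R in
  [/\ 1 <= r <= p, e <= q & eps * p + r <= p + rt p z].
Proof.
move=> p0 zu q r eps e.
have hr : 1 <= r <= p by rewrite /r; case: u zu {q r eps e} => [|u'] //= _; rewrite ltn_pmod.
split => //.
- rewrite /e /eps /r /q; case: u zu {q r eps e hr} => [|u'] //= zu.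
  case: z zu => [|z'] /= zu.
  + have -> : (p < (u' %% p).+1) = false by rewrite ltnS leqNgt ltn_pmod.
    move: (u' %/ p) => Q; lia.
  + have hq : z' %/ p <= u' %/ p by apply: leq_div2r; lia.
    have ez := divn_eq z' p; have eu := divn_eq u' p.
    have mz := ltn_pmod z' p0; have mu := ltn_pmod u' p0.
    case: (ltnP (z' %% p).+1 (u' %% p).+1) => hm /=.
    * move: (u' %/ p) (z' %/ p) hq => A B hq; lia.
    * have hlt : z' %/ p < u' %/ p.
        rewrite ltn_neqAle hq andbT; apply/eqP => hE.
        rewrite hE in ez; move: ez eu zu hm; move: (u' %/ p * p) => A; lia.
      move: (u' %/ p) (z' %/ p) hlt => A B hlt; lia.
- rewrite /eps; case: ltnP => h; lia.
Qed.
Theorem mainTheorem1 (K : fieldType) (n : nat) (m : nat -> nat)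
    (u v w z lam mu : nat) :
  (2 <= n)%N ->
  let p := n.-1 in
  (* m_0 < ... < m_p arithmetic, m_n > 0 *)
  (0 < m 0)%N ->
  (exists d, (0 < d)%N /\ forall i, (i <= p)%N -> m i = (m 0 + i * d)%N) ->
  (0 < m n)%N ->
  (* gcd = 1 *)
  \big[gcdn/0%N]_(i < n.+1) m i = 1%N ->
  (* m_0,...,m_n minimally generate Gamma *)
  (forall i, (i <= n)%N ->
     ~ exists c : nat -> nat,
         m i = (\sum_(j < n.+1 | (j : nat) != i) c j * m j)%N) ->
  (* u = min { t : g_t notin S } *)
  ~ apery n m (gt p m u) ->
  (forall t, (t < u)%N -> apery n m (gt p m t)) ->
  (* upsilon = min { b >= 1 : b m_n in Gamma' } *)
  (1 <= v)%N -> in_sg n m (v * m n) ->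
  (forall b, (1 <= b < v)%N -> ~ in_sg n m (b * m n)) ->
  (* g_u = lam m_0 + w m_n, upsilon m_n = mu m_0 + g_z *)
  (w < v)%N -> (z < u)%N -> (1 <= lam)%N ->
  gt p m u = (lam * m 0 + w * m n)%N ->
  (v * m n = mu * m 0 + gt p m z)%N ->
  let q := (u.-1 %/ p)%N in
  let r := rt p u in
  let eps := if (rt p z < r)%N then 0%N else 1%N in
  let e := absz (qt p u - qt p z - eps%:Z)%R in
  let X := Xv K n in
  rr_closed (ideal_span (fun f : {mpoly K[n.+1]} =>
       (exists i, (r <= i <= p)%N /\ f = (X i * X p ^+ q)%R)
    \/ (exists j, ((eps * p + r)%:Z - (rt p z)%:Z <= j%:Z)%R /\ (j <= p)%N /\
                  f = (X j * X p ^+ e * X n ^+ (v - w))%R)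
    \/ f = (X n ^+ v)%R
    \/ (exists i j, (1 <= i <= j)%N /\ (j <= p.-1)%N /\ f = (X i * X j)%R))).
Proof.
move=> n2 p m0 har mn0 gcd1 mg nap hap v1 insg hmin wv zu lam1 hgu hvz q r eps e X.
have p0 : (0 < p)%N by rewrite /p; lia.
have pn : (p < n)%N by rewrite /p; lia.
have [hr eq Bp] : [/\ (1 <= r <= p)%N, (e <= q)%N & (eps * p + r <= p + rt p z)%N] :=
  params_ok p u z p0 zu.
set rz := rt p z.
set gen := fun g => exists kd, valid p r eps rz kd /\ g = dmn n p q e v w kd.
match goal with |- rr_closed (ideal_span ?G0) => set G := G0 end.
have hG : forall f, G f -> exists g, gen g /\ f = 'X_[g].
  move=> f [[i [hi ->]] | [[j [hj1 [hj2 ->]]] | [-> | [i [j [hij [hj ->]]]]]]].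
  - exists (dmn n p q e v w (KA i)); split; first by exists (KA i); split => //=.
    by rewrite dmnA //; lia.
  - exists (dmn n p q e v w (KB j)); split.
      by exists (KB j); split => //=; rewrite hj2 andbT /rz; lia.
    by rewrite dmnB //; lia.
  - exists (dmn n p q e v w KC); split; first by exists KC.
    by rewrite dmnC.
  - exists (dmn n p q e v w (KD i j)); split.
      by exists (KD i j); split => //=; rewrite hj andbT.
    by rewrite dmnD //; lia.
have hGc : forall kd, valid p r eps rz kd -> G 'X_[dmn n p q e v w kd].
  case=> [i|j||i j] /= h.
  - by left; exists i; split => //; rewrite dmnA //; lia.
  - right; left; exists j; split; first by rewrite /rz in h; lia.
    by split; [lia | rewrite dmnB //; lia].
  - by right; right; left; rewrite dmnC.
  - right; right; right; exists i, j; split; first lia.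
    by split; [lia | rewrite dmnD //; lia].
move=> x; split; last first.
  move=> hx; exists 1%N; split => // y hy.
  by apply: span_single; exists x, y.
case=> k [k1 hk].
have eC : (X n ^+ v)%R = 'X_[dmn n p q e v w KC] by rewrite dmnC.
have eA : (X p * X p ^+ q)%R = 'X_[dmn n p q e v w (KA p)] by rewrite dmnA //; lia.
have hCG : G (X n ^+ v)%R by right; right; left.
have hAG : G (X p * X p ^+ q)%R by left; exists p; split => //; lia.
have HC := hk _ (pow_in k (span_single hCG)).
have HA := hk _ (pow_in k (span_single hAG)).
rewrite eC mpolyXn in HC; rewrite eA mpolyXn in HA.
have gC := pow_good hG HC.
have gA := pow_good hG HA.
rewrite (mpolyE x) big_seq.
apply: (big_ind (ideal_span G)); [exact: span0 | exact: span_add |].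
move=> mm hm.
have [kd [vk le]] : exists kd, valid p r eps rz kd /\ (dmn n p q e v w kd <= mm)%MM.
  apply: NNPP => hne.
  have mC : (dmn n p q e v w KC *+ k + mm)%MM \in msupp (x * 'X_[dmn n p q e v w KC *+ k]).
    by rewrite (perm_mem (msuppMX _ _)); apply: map_f.
  have mA : (dmn n p q e v w (KA p) *+ k + mm)%MM \in msupp (x * 'X_[dmn n p q e v w (KA p) *+ k]).
    by rewrite (perm_mem (msuppMX _ _)); apply: map_f.
  have [s2 [al2 sz2 hs2]] := Pk_list (gC _ mC).
  have [s1 [al1 sz1 hs1]] := Pk_list (gA _ mA).
  apply: (core n p q e v w r eps rz k (fun j => mm (inord j)) n2 (erefl _) hr eq wv Bp).
  - move=> kd vk hle; apply: hne; exists kd; split => //.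
    apply/mnm_lepP => i; rewrite mnmE; have := hle i (ltn_ord i); rewrite inord_val //.
  - exists s1; split => // j jn; have := hs1 j jn.
    rewrite mnmDE mulmnE mnmE inordK //= eq_sym.
    by case: (j =P p) => _ /=; lia.
  - exists s2; split => // j jn; have := hs2 j jn.
    rewrite mnmDE mulmnE mnmE inordK //= eq_sym.
    by case: (j =P n) => _ /=; lia.
have -> : 'X_[mm] = ('X_[mm - dmn n p q e v w kd] * 'X_[dmn n p q e v w kd] : {mpoly K[n.+1]})%R.
  by rewrite -mpolyXD submK.
rewrite scalerAl; apply: span_mull; apply: span_single; exact: hGc.
Qed.
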